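(* Let $\mathfrak g=A_2$, $\lambda=m_1\lambda_1+m_2\lambda_2\in\Lambda^+$ and $\mu=u_1\lambda_1+u_2\lambda_2\in\Lambda^+$ with $m^\mu_{\lambda,2}\neq0$. If $m_1\ge m_2$ then $u_1+2u_2\ge2(m_1-m_2)$; if $m_1\le m_2$ then $2u_1+u_2\ge2(m_2-m_1)$.
   Context: $A_2=\mathfrak{sl}_3$ with fundamental weights $\lambda_1,\lambda_2$ and dominant weights $\Lambda^+=\mathbb N\lambda_1+\mathbb N\lambda_2$. The plethysm multiplicities $m^\mu_{\lambda,2}$ are defined by $\psi_2(\mathrm{ch}_\lambda)=\sum_{\mu\in\Lambda^+}m^\mu_{\lambda,2}\mathrm{ch}_\mu$, with $\mathrm{ch}_\lambda$ the formal character of the irreducible representation $V_\lambda$ and $\psi_2(e_\nu)=e_{2\nu}$. *)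

(* Defs.v *)
From HB Require Import structures.
From mathcomp Require Import all_boot all_order all_algebra.
Set Implicit Arguments. Unset Strict Implicit. Unset Printing Implicit Defensive.
Import Order.TTheory GRing.Theory Num.Theory.

(* Weights of A_2 = sl_3 are written in the basis of fundamental weights:
   the pair (x, y) : int * int stands for x*lambda_1 + y*lambda_2.
   A formal character is the function nu |-> (coefficient of e_nu). *)

(* Weight multiplicity of the weight x*l1 + y*l2 in the irreducible
   sl_3-module V_lambda, lambda = m1*l1 + m2*l2, computed by counting
   Gelfand-Tsetlin patterns with top row (a1,a2,a3) = (m1+m2, m2, 0):
   second row (b1,b2) with a1 >= b1 >= a2 >= b2 >= 0, third row c with
   b1 >= c >= b2.  Content: c ones, b1+b2-c twos, a1+a2-b1-b2 threes; the
   weight is (c1-c2)*l1 + (c2-c3)*l2. *)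
Definition wmult (m1 m2 : nat) (x y : int) : nat :=
  \sum_(b1 < (m1 + m2).+1 | (m2 <= b1)%N)
    \sum_(b2 < m2.+1)
      \sum_(c < b1.+1 | (b2 <= c)%N)
        ((2 * (c : nat)%:Z - (b1 : nat)%:Z - (b2 : nat)%:Z == x)%R &&
         (2 * ((b1 : nat)%:Z + (b2 : nat)%:Z) - (c : nat)%:Z
            - (m1 + 2 * m2)%:Z == y)%R : nat).

Definition ch (m1 m2 : nat) (x y : int) : int := (wmult m1 m2 x y)%:Z.

(* The Adams operation psi_2 (e_nu |-> e_{2 nu}) on formal characters. *)
Definition psi2 (f : int -> int -> int) (x y : int) : int :=
  if ((2 %| x)%Z && (2 %| y)%Z) then f (x %/ 2)%Z (y %/ 2)%Z else 0%R.

Definition plethysm_decomp (m1 m2 : nat) (mult : nat -> nat -> int) (N : nat)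
  : Prop :=
  (forall u1 u2 : nat, (N <= u1)%N || (N <= u2)%N -> mult u1 u2 = 0%R) /\
  (forall x y : int,
     psi2 (ch m1 m2) x y =
     (\sum_(u1 < N) \sum_(u2 < N) mult u1 u2 * ch u1 u2 x y)%R).

(* Main.v *)
Require Import Defs.
From mathcomp Require Import zify.
From HB Require Import structures.
From mathcomp Require Import all_boot all_order all_algebra.
Set Implicit Arguments. Unset Strict Implicit. Unset Printing Implicit Defensive.
Import Order.TTheory GRing.Theory Num.Theory.
Local Open Scope ring_scope.

Lemma cnt (n : nat) (lo hi : int) :
  (\sum_(i < n) nat_of_bool ((lo <= (i:nat)%:Z)%R && ((i:nat)%:Z <= hi)%R))%N%:Z
  = Num.max 0 (Num.min hi (n%:Z - 1) - Num.max lo 0 + 1).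
Proof.
elim: n => [|n IH]; first by rewrite big_ord0; lia.
rewrite big_ord_recr /= PoszD IH; lia.
Qed.

Definition gC (m1 m2 : nat) (C S : int) : int :=
 Num.max 0 (Num.min (m1+m2)%:Z S - Num.max (Num.max m2%:Z C) (Num.max (S - m2%:Z) (S - C)) + 1).

Lemma wmult_closed m1 m2 x y C :
  3 * C = 2 * x + y + (m1 + 2 * m2)%:Z -> (wmult m1 m2 x y)%:Z = gC m1 m2 C (2 * C - x).
Proof.
move=> HC; set S := 2 * C - x.
rewrite /wmult.
have H1 : forall (b1 : 'I_(m1+m2).+1) (b2 : 'I_m2.+1),
  \sum_(c < b1.+1 | (b2 <= c)%N)
        ((2 * (c : nat)%:Z - (b1 : nat)%:Z - (b2 : nat)%:Z == x)%R &&
         (2 * ((b1 : nat)%:Z + (b2 : nat)%:Z) - (c : nat)%:Z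
            - (m1 + 2 * m2)%:Z == y)%R : nat)
  = nat_of_bool (((b2:nat)%:Z <= C)%R && (C <= (b1:nat)%:Z)%R && ((b1:nat)%:Z + (b2:nat)%:Z == S)%R).
  move=> b1 b2; rewrite big_mkcond /=.
  rewrite (eq_bigr (fun c : 'I_b1.+1 => nat_of_bool ((C <= (c:nat)%:Z)%R &&
      ((c:nat)%:Z <= C - 1 + (nat_of_bool (((b2:nat)%:Z <= C)%R && ((b1:nat)%:Z + (b2:nat)%:Z == S)%R))%:Z)%R))); last first.
    move=> c _; case: leqP => h /=; rewrite /S; lia.
  apply/eqP; rewrite -eqz_nat cnt; apply/eqP; rewrite /S; lia.
rewrite (eq_bigr _ (fun b1 _ => eq_bigr _ (fun b2 _ => H1 b1 b2))) => {H1}.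
have H2 : forall (b1 : 'I_(m1+m2).+1),
  \sum_(b2 < m2.+1) nat_of_bool (((b2:nat)%:Z <= C)%R && (C <= (b1:nat)%:Z)%R && ((b1:nat)%:Z + (b2:nat)%:Z == S)%R)
  = nat_of_bool ((0 <= S - (b1:nat)%:Z)%R && (S - (b1:nat)%:Z <= m2%:Z)%R && (S - (b1:nat)%:Z <= C)%R && (C <= (b1:nat)%:Z)%R).
  move=> b1.
  rewrite (eq_bigr (fun b2 : 'I_m2.+1 => nat_of_bool ((S - (b1:nat)%:Z <= (b2:nat)%:Z)%R &&
      ((b2:nat)%:Z <= S - (b1:nat)%:Z - 1 + (nat_of_bool ((S - (b1:nat)%:Z <= C)%R && (C <= (b1:nat)%:Z)%R))%:Z)%R))); last first.
    move=> b2 _; lia.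
  apply/eqP; rewrite -eqz_nat cnt; apply/eqP; lia.
rewrite (eq_bigr _ (fun b1 _ => H2 b1)) => {H2}.
rewrite big_mkcond /=.
rewrite (eq_bigr (fun b1 : 'I_(m1+m2).+1 => nat_of_bool ((Num.max (Num.max m2%:Z C) (Num.max (S - m2%:Z) (S - C)) <= (b1:nat)%:Z)%R &&
      ((b1:nat)%:Z <= S)%R))); last first.
  move=> b1 _; case: leqP => h /=; lia.
rewrite cnt /gC; lia.
Qed.

Lemma wmult_zero m1 m2 x y :
  (forall C : int, 3 * C != 2 * x + y + (m1 + 2 * m2)%:Z) -> wmult m1 m2 x y = 0%N.
Proof.
move=> H; rewrite /wmult big1 // => b1 _; rewrite big1 // => b2 _; rewrite big1 // => c _.
have := H (c:nat)%:Z; lia.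
Qed.

Lemma max_cases (x y : int) : (x <= y /\ Num.max x y = y) \/ (y < x /\ Num.max x y = x).
Proof. lia. Qed.
Lemma min_cases (x y : int) : (x <= y /\ Num.min x y = x) \/ (y < x /\ Num.min x y = y).
Proof. lia. Qed.

Ltac smm := repeat (match goal with
 | |- context[Num.min ?x ?y] => destruct (min_cases x y) as [[? ->]|[? ->]]
 | |- context[Num.max ?x ?y] => destruct (max_cases x y) as [[? ->]|[? ->]]
 end; try (exfalso; lia)).

Definition phi (n1 n2 : nat) (a b : int) : int :=
  Num.max 0 (1 + Num.min (Num.min n1%:Z n2%:Z) (Num.min a b)).

Lemma red (n1 n2 u1 u2 : nat) (C dc ds : int) :
  3 * C = 2 * u1%:Z + u2%:Z + (n1 + 2 * n2)%:Z ->
  (dc = 0 /\ ds = 0) \/ (dc = 1 /\ ds = 0) \/ (dc = 0 /\ ds = 1) \/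
  (dc = 2 /\ ds = 1) \/ (dc = 1 /\ ds = 2) \/ (dc = 2 /\ ds = 2) ->
  gC n1 n2 (C + dc) (2 * C - u1%:Z + ds) =
  phi n1 n2 ((n1 + n2)%:Z - C - dc) ((n1 + 2 * n2)%:Z - (2 * C - u1%:Z) - ds).
Proof.
move=> HC Hd; rewrite /gC /phi.
case: Hd => [[-> ->]|[[-> ->]|[[-> ->]|[[-> ->]|[[-> ->]|[-> ->]]]]]]; smm; lia.
Qed.

Lemma phi_id (n1 n2 : nat) (a b : int) :
  (b >= 2 * a - n1%:Z) -> (a >= 2 * b - n2%:Z) ->
  phi n1 n2 a b - phi n1 n2 (a-1) b - phi n1 n2 a (b-1) + phi n1 n2 (a-2) (b-1)
  + phi n1 n2 (a-1) (b-2) - phi n1 n2 (a-2) (b-2) = (nat_of_bool ((a == 0) && (b == 0)))%:Z.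
Proof.
move=> h1 h2; rewrite /phi.
case: (boolP (a == 0)) => /eqP Ha; case: (boolP (b == 0)) => /eqP Hb /=; smm; lia.
Qed.


Lemma ch_pt (n1 n2 u1 u2 : nat) (C px py dc ds : int) :
  3 * C = 2 * u1%:Z + u2%:Z + (n1 + 2 * n2)%:Z ->
  (px = 0 /\ py = 0 /\ dc = 0 /\ ds = 0) \/ (px = 2 /\ py = -1 /\ dc = 1 /\ ds = 0) \/
  (px = -1 /\ py = 2 /\ dc = 0 /\ ds = 1) \/ (px = 3 /\ py = 0 /\ dc = 2 /\ ds = 1) \/
  (px = 0 /\ py = 3 /\ dc = 1 /\ ds = 2) \/ (px = 2 /\ py = 2 /\ dc = 2 /\ ds = 2) ->
  ch n1 n2 (u1%:Z + px) (u2%:Z + py) =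
  phi n1 n2 ((n1 + n2)%:Z - C - dc) ((n1 + 2 * n2)%:Z - (2 * C - u1%:Z) - ds).
Proof.
move=> HC Hd.
rewrite /ch (@wmult_closed _ _ _ _ (C + dc)); last first. lia.
have -> : 2 * (C + dc) - (u1%:Z + px) = 2 * C - u1%:Z + ds by lia.
have Hd2 : (dc = 0 /\ ds = 0) \/ (dc = 1 /\ ds = 0) \/ (dc = 0 /\ ds = 1) \/ (dc = 2 /\ ds = 1) \/ (dc = 1 /\ ds = 2) \/ (dc = 2 /\ ds = 2) by (case: Hd => [[_ [_ H]]|[[_ [_ H]]|[[_ [_ H]]|[[_ [_ H]]|[[_ [_ H]]|[_ [_ H]]]]]]]; tauto).
rewrite (@red n1 n2 u1 u2 C dc ds HC Hd2).
done.
Qed.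

Lemma weyl (n1 n2 u1 u2 : nat) :
  ch n1 n2 (u1%:Z + 0) (u2%:Z + 0) - ch n1 n2 (u1%:Z + 2) (u2%:Z + -1)
  - ch n1 n2 (u1%:Z + -1) (u2%:Z + 2) + ch n1 n2 (u1%:Z + 3) (u2%:Z + 0)
  + ch n1 n2 (u1%:Z + 0) (u2%:Z + 3) - ch n1 n2 (u1%:Z + 2) (u2%:Z + 2)
  = (nat_of_bool ((n1 == u1) && (n2 == u2)))%:Z.
Proof.
set T := 2 * u1%:Z + u2%:Z + (n1 + 2 * n2)%:Z.
case: (eqVneq (T %% 3)%Z 0) => hT.
- have HC : 3 * (T %/ 3)%Z = T by lia.
  move: (T %/ 3)%Z HC => C HC.
  rewrite (@ch_pt _ _ _ _ C 0 0 0 0) //; last by do ?[by left; do !split | right].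
  rewrite (@ch_pt _ _ _ _ C 2 (-1) 1 0) //; last by do ?[by left; do !split | right].
  rewrite (@ch_pt _ _ _ _ C (-1) 2 0 1) //; last by do ?[by left; do !split | right].
  rewrite (@ch_pt _ _ _ _ C 3 0 2 1) //; last by do ?[by left; do !split | right].
  rewrite (@ch_pt _ _ _ _ C 0 3 1 2) //; last by do ?[by left; do !split | right].
  rewrite (@ch_pt _ _ _ _ C 2 2 2 2) //; last by do ?[by left; do !split | right].
  set a := _ - C - 0; set b := _ - _ - 0.
  have := @phi_id n1 n2 a b.
  have -> : (n1 + n2)%:Z - C - 1 = a - 1 by rewrite /a; lia.
  have -> : (n1 + n2)%:Z - C - 2 = a - 2 by rewrite /a; lia.
  have -> : (n1 + 2 * n2)%:Z - (2 * C - u1%:Z) - 1 = b - 1 by rewrite /b; lia.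
  have -> : (n1 + 2 * n2)%:Z - (2 * C - u1%:Z) - 2 = b - 2 by rewrite /b; lia.
  move=> H; rewrite H; last 2 first.
    - rewrite /a /b; lia.
    - rewrite /a /b; lia.
  congr (Posz (nat_of_bool _)); rewrite /a /b; lia.
- rewrite /ch !wmult_zero; try (move=> C; lia).
  have : (n1 == u1) && (n2 == u2) = false by lia.
  by move=> ->.
Qed.


Definition bad (m1 m2 : nat) (u1 u2 : int) : Prop :=
  ((m2 <= m1)%N /\ u1 + 2 * u2 < 2 * (m1%:Z - m2%:Z)) \/
  ((m1 <= m2)%N /\ 2 * u1 + u2 < 2 * (m2%:Z - m1%:Z)).

Lemma ch_sh (m1 m2 : nat) (x y x' y' k : int) :
  2 * x' + y' = 2 * x + y + 3 * k ->
  (forall C, 3 * C = 2 * x + y + (m1 + 2 * m2)%:Z ->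
     gC m1 m2 C (2 * C - x) = gC m1 m2 (C + k) (2 * (C + k) - x')) ->
  ch m1 m2 x y = ch m1 m2 x' y'.
Proof.
move=> Hk Hg; rewrite /ch.
set T := 2 * x + y + (m1 + 2 * m2)%:Z.
case: (eqVneq (T %% 3)%Z 0) => hT.
- have HC : 3 * (T %/ 3)%Z = T by lia.
  move: (T %/ 3)%Z HC => C HC.
  rewrite (@wmult_closed _ _ _ _ C) // (@wmult_closed _ _ _ _ (C + k)); last by rewrite -/T; lia.
  exact: Hg.
- rewrite !wmult_zero //; move=> C; rewrite -/T; lia.
Qed.

Lemma L_ee (m1 m2 p q : nat) : bad m1 m2 (2 * p%:Z) (2 * q%:Z) ->
  ch m1 m2 p%:Z q%:Z = ch m1 m2 (p%:Z + 1) (q%:Z + 1).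
Proof.
move=> Hb; apply: (@ch_sh _ _ _ _ _ _ 1); first by lia.
move=> C HC; rewrite /gC; case: Hb => [[? ?]|[? ?]]; smm; lia.
Qed.

Lemma L_eo (m1 m2 p q : nat) : bad m1 m2 (2 * p%:Z) (2 * q%:Z + 1) ->
  ch m1 m2 (p%:Z + 1) q%:Z = ch m1 m2 p%:Z (q%:Z + 2).
Proof.
move=> Hb; apply: (@ch_sh _ _ _ _ _ _ 0); first by lia.
move=> C HC; rewrite /gC; case: Hb => [[? ?]|[? ?]]; smm; lia.
Qed.

Lemma L_oe (m1 m2 p q : nat) : bad m1 m2 (2 * p%:Z + 1) (2 * q%:Z) ->
  ch m1 m2 p%:Z (q%:Z + 1) = ch m1 m2 (p%:Z + 2) q%:Z.
Proof.
move=> Hb; apply: (@ch_sh _ _ _ _ _ _ 1); first by lia.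
move=> C HC; rewrite /gC; case: Hb => [[? ?]|[? ?]]; smm; lia.
Qed.


Lemma psi2_ev f (x y a b : int) : x = 2 * a -> y = 2 * b -> psi2 f x y = f a b.
Proof.
move=> -> ->; rewrite /psi2.
have -> : (2 %| 2 * a)%Z = true by apply/dvdz_mod0P; lia.
have -> : (2 %| 2 * b)%Z = true by apply/dvdz_mod0P; lia.
by congr f; lia.
Qed.

Lemma psi2_o1 f (x y : int) : (x %% 2)%Z = 1 -> psi2 f x y = 0.
Proof.
move=> h; rewrite /psi2.
have -> : (2 %| x)%Z = false by apply/negbTE/negP => /dvdz_mod0P; lia.
by [].
Qed.

Lemma psi2_o2 f (x y : int) : (y %% 2)%Z = 1 -> psi2 f x y = 0.
Proof.
move=> h; rewrite /psi2.
have -> : (2 %| y)%Z = false by apply/negbTE/negP => /dvdz_mod0P; lia.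
by rewrite andbF.
Qed.

Lemma sum6 (N : nat) (F1 F2 F3 F4 F5 F6 : 'I_N -> 'I_N -> int) :
  \sum_(a < N) \sum_(b < N) (F1 a b - F2 a b - F3 a b + F4 a b + F5 a b - F6 a b) =
  (\sum_(a < N) \sum_(b < N) F1 a b) - (\sum_(a < N) \sum_(b < N) F2 a b)
  - (\sum_(a < N) \sum_(b < N) F3 a b) + (\sum_(a < N) \sum_(b < N) F4 a b)
  + (\sum_(a < N) \sum_(b < N) F5 a b) - (\sum_(a < N) \sum_(b < N) F6 a b).
Proof.
under eq_bigr => a _ do rewrite !(sumrB, big_split) /=.
by rewrite !(sumrB, big_split).
Qed.

Lemma extract (N u1 u2 : nat) (mult : nat -> nat -> int) : (u1 < N)%N -> (u2 < N)%N ->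
  \sum_(a < N) \sum_(b < N) mult a b * (nat_of_bool (((a:nat) == u1) && ((b:nat) == u2)))%:Z = mult u1 u2.
Proof.
move=> h1 h2.
rewrite (bigD1 (Ordinal h1)) //= [X in _ + X]big1 ?addr0; last first.
  move=> a /eqP ne; apply: big1 => b _.
  have -> : ((a:nat) == u1) = false by apply/negbTE/eqP => e; apply: ne; apply: val_inj.
  by rewrite mulr0.
rewrite (bigD1 (Ordinal h2)) //= [X in _ + X]big1 ?addr0; last first.
  move=> b /eqP ne.
  have -> : ((b:nat) == u2) = false by apply/negbTE/eqP => e; apply: ne; apply: val_inj.
  by rewrite andbF mulr0.
by rewrite !eqxx mulr1.
Qed.


Theorem mainTheorem15 (m1 m2 u1 u2 : nat) (mult : nat -> nat -> int) (N : nat) :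
  plethysm_decomp m1 m2 mult N ->
  mult u1 u2 <> 0%R ->
  ((m2 <= m1)%N -> (2 * (m1 - m2) <= u1 + 2 * u2)%N) /\
  ((m1 <= m2)%N -> (2 * (m2 - m1) <= 2 * u1 + u2)%N).
Proof.
move=> [Hsupp Hdec] Hne.
have hN1 : (u1 < N)%N.
  rewrite ltnNge; apply/negP => h; apply: Hne; apply: Hsupp; by rewrite h.
have hN2 : (u2 < N)%N.
  rewrite ltnNge; apply/negP => h; apply: Hne; apply: Hsupp; by rewrite h orbT.
have HE : psi2 (ch m1 m2) (u1%:Z + 0) (u2%:Z + 0) - psi2 (ch m1 m2) (u1%:Z + 2) (u2%:Z + -1)
  - psi2 (ch m1 m2) (u1%:Z + -1) (u2%:Z + 2) + psi2 (ch m1 m2) (u1%:Z + 3) (u2%:Z + 0)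
  + psi2 (ch m1 m2) (u1%:Z + 0) (u2%:Z + 3) - psi2 (ch m1 m2) (u1%:Z + 2) (u2%:Z + 2) = mult u1 u2.
  rewrite !Hdec -(extract mult hN1 hN2).
  under [RHS]eq_bigr => a _ do under eq_bigr => b _ do rewrite -weyl !(mulrBr, mulrDr).
  under [RHS]eq_bigr => a _ do rewrite !(sumrB, big_split) /=.
  by rewrite !(sumrB, big_split).
have main : bad m1 m2 u1%:Z u2%:Z -> False.
  move=> Hb; apply: Hne; rewrite -HE.
  set p := (u1 %/ 2)%N; set q := (u2 %/ 2)%N.
  have [e1|e1] : (u1 = 2 * p)%N \/ (u1 = 2 * p + 1)%N by rewrite /p; lia.
  - have [e2|e2] : (u2 = 2 * q)%N \/ (u2 = 2 * q + 1)%N by rewrite /q; lia.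
    + rewrite (@psi2_ev _ (u1%:Z + 0) (u2%:Z + 0) p%:Z q%:Z); try lia.
      rewrite (@psi2_o2 _ (u1%:Z + 2) (u2%:Z + -1)); last by lia.
      rewrite (@psi2_o1 _ (u1%:Z + -1) (u2%:Z + 2)); last by lia.
      rewrite (@psi2_o1 _ (u1%:Z + 3) (u2%:Z + 0)); last by lia.
      rewrite (@psi2_o2 _ (u1%:Z + 0) (u2%:Z + 3)); last by lia.
      rewrite (@psi2_ev _ (u1%:Z + 2) (u2%:Z + 2) (p%:Z + 1) (q%:Z + 1)); try lia.
      rewrite (@L_ee m1 m2 p q); first by lia.
      by rewrite /bad in Hb *; lia.
    + rewrite (@psi2_o2 _ (u1%:Z + 0) (u2%:Z + 0)); last by lia.
      rewrite (@psi2_ev _ (u1%:Z + 2) (u2%:Z + -1) (p%:Z + 1) q%:Z); try lia.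
      rewrite (@psi2_o1 _ (u1%:Z + -1) (u2%:Z + 2)); last by lia.
      rewrite (@psi2_o1 _ (u1%:Z + 3) (u2%:Z + 0)); last by lia.
      rewrite (@psi2_ev _ (u1%:Z + 0) (u2%:Z + 3) p%:Z (q%:Z + 2)); try lia.
      rewrite (@psi2_o2 _ (u1%:Z + 2) (u2%:Z + 2)); last by lia.
      rewrite (@L_eo m1 m2 p q); first by lia.
      by rewrite /bad in Hb *; lia.
  - have [e2|e2] : (u2 = 2 * q)%N \/ (u2 = 2 * q + 1)%N by rewrite /q; lia.
    + rewrite (@psi2_o1 _ (u1%:Z + 0) (u2%:Z + 0)); last by lia.
      rewrite (@psi2_o1 _ (u1%:Z + 2) (u2%:Z + -1)); last by lia.
      rewrite (@psi2_ev _ (u1%:Z + -1) (u2%:Z + 2) p%:Z (q%:Z + 1)); try lia.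
      rewrite (@psi2_ev _ (u1%:Z + 3) (u2%:Z + 0) (p%:Z + 2) q%:Z); try lia.
      rewrite (@psi2_o1 _ (u1%:Z + 0) (u2%:Z + 3)); last by lia.
      rewrite (@psi2_o1 _ (u1%:Z + 2) (u2%:Z + 2)); last by lia.
      rewrite (@L_oe m1 m2 p q); first by lia.
      by rewrite /bad in Hb *; lia.
    + rewrite (@psi2_o1 _ (u1%:Z + 0) (u2%:Z + 0)); last by lia.
      rewrite (@psi2_o1 _ (u1%:Z + 2) (u2%:Z + -1)); last by lia.
      rewrite (@psi2_o2 _ (u1%:Z + -1) (u2%:Z + 2)); last by lia.
      rewrite (@psi2_o2 _ (u1%:Z + 3) (u2%:Z + 0)); last by lia.
      rewrite (@psi2_o1 _ (u1%:Z + 0) (u2%:Z + 3)); last by lia.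
      rewrite (@psi2_o1 _ (u1%:Z + 2) (u2%:Z + 2)); last by lia.
      lia.
split => hm.
- rewrite leqNgt; apply/negP => hlt; apply: main; left; split => //; lia.
- rewrite leqNgt; apply/negP => hlt; apply: main; right; split => //; lia.
Qed.
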